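(* Let $(G,I)$ be a single interval total sum game, i.e. $I$ is a single real interval. If Eve has a winning strategy then she has a finite memory winning strategy.
   Context: A game graph is a tuple $G=(V,V_\exists,E,w,q_0)$ where $(V,E)$ is a finite directed graph in which every vertex has an outgoing edge, $w:E\to\mathbb{Z}$ is an integer edge-weight function, $V_\exists\subseteq V$ are Eve's vertices (the rest are Adam's), and $q_0\in V$ the initial vertex. A play is an infinite path $\pi=v_0v_1\cdots$ with $v_0=q_0$; write $w(\pi[..k])=\sum_{i=0}^{k-1}w(v_i,v_{i+1})$. A strategy for a player maps finite play prefixes ending in one of that player's vertices to a successor vertex; it has finite memory if it can be realized as the output of a finite-state machine reading the play. The total sum payoff is $\underline{Total}(\pi)=\liminf_{k\to\infty}w(\pi[..k])\in\mathbb{Z}\cup\{\pm\infty\}$. A play is winning for Eve iff $\underline{Total}(\pi)\in I$; a strategy of Eve is winning if all consistent plays are winning for her. *)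

(* Defs.v *)
From HB Require Import structures.
From mathcomp Require Import all_boot all_order all_algebra.
From mathcomp Require Import all_classical all_reals all_analysis.
Set Implicit Arguments. Unset Strict Implicit. Unset Printing Implicit Defensive.
Import Order.TTheory GRing.Theory Num.Theory.
Local Open Scope ring_scope.

Section TotalGames.
Variable V : finType.

Definition is_play (E : rel V) (q0 : V) (p : nat -> V) : Prop :=
  p 0%N = q0 /\ forall k, E (p k) (p k.+1).

(* A strategy of Eve: given the history v_0 ... v_{k-1} and the current
   vertex v_k (in V_exists), it returns a successor vertex. *)
Definition strategy := seq V -> V -> V.

Definition is_strategy (E : rel V) (VE : {set V}) (sigma : strategy) : Prop :=
  forall h v, v \in VE -> E v (sigma h v).

Definition prefix (p : nat -> V) (k : nat) : seq V := [seq p i | i <- iota 0 k].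

Definition consistent (VE : {set V}) (sigma : strategy) (p : nat -> V) : Prop :=
  forall k, p k \in VE -> p k.+1 = sigma (prefix p k) (p k).

Definition finite_memory (sigma : strategy) : Prop :=
  exists (M : finType) (m0 : M) (upd : M -> V -> M) (out : M -> V -> V),
    forall h v, sigma h v = out (foldl upd m0 h) v.

Definition partial_weight (w : V -> V -> int) (p : nat -> V) (k : nat) : int :=
  \sum_(i < k) w (p i) (p i.+1).

Definition total {R : realType} (w : V -> V -> int) (p : nat -> V) : \bar R :=
  limn_einf (fun k => ((partial_weight w p k)%:~R : R)%:E).

Definition winning_play {R : realType} (I : interval R) (w : V -> V -> int)
  (p : nat -> V) : Prop :=
  exists x : R, total w p = x%:E /\ x \in I.

Definition winning_strategy {R : realType} (E : rel V) (VE : {set V})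
  (w : V -> V -> int) (q0 : V) (I : interval R) (sigma : strategy) : Prop :=
  is_strategy E VE sigma /\
  forall p, is_play E q0 p -> consistent VE sigma p -> winning_play I w p.

End TotalGames.

(* Main.v *)
Require Import Defs.
From HB Require Import structures.
From mathcomp Require Import all_boot all_order all_algebra.
From mathcomp Require Import all_classical all_reals all_analysis.
Import Order.TTheory GRing.Theory Num.Theory.
Local Open Scope ring_scope.
From mathcomp Require Import zify.
From mathcomp Require Import ring lra.
Section LimInf.
Local Open Scope ereal_scope.

Lemma einfs_sup_eq (R : realType) (u : (\bar R)^nat) :
  limn_einf u = ereal_sup (range (einfs u)).
Proof.
rewrite limn_einf_lim; apply: cvg_lim => //; exact: cvg_einfs_sup.
Qed.

Lemma liminf_int_eq (R : realType) (S : nat -> int) (m : int) :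
  (exists K, forall k, (K <= k)%N -> (m <= S k)%R) ->
  (forall K, exists k, (K <= k)%N /\ S k = m) ->
  limn_einf (fun k => ((S k)%:~R : R)%:E) = ((m%:~R : R))%:E.
Proof.
move=> [K HK] Hio; rewrite einfs_sup_eq; apply/eqP; rewrite eq_le; apply/andP; split.
- apply: ge_ereal_sup => _ [n _ <-].
  have [k [nk Skm]] := Hio n.
  apply: (@le_trans _ _ ((S k)%:~R%:E)); last by rewrite Skm.
  by apply: ereal_inf_lbound; exists k.
- apply: (@le_trans _ _ (einfs (fun k => ((S k)%:~R : R)%:E) K)); last first.
    by apply: ereal_sup_ubound; exists K.
  apply: le_ereal_inf_tmp => _ [k /= Kk <-].
  by rewrite lee_fin ler_int HK.
Qed.


Lemma liminf_int_fin (R : realType) (S : nat -> int) (x : R) :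
  limn_einf (fun k => ((S k)%:~R : R)%:E) = x%:E ->
  exists N : int, x = N%:~R /\ (exists K, forall k, (K <= k)%N -> (N <= S k)%R) /\
    (forall K, exists k, (K <= k)%N /\ S k = N).
Proof.
set u := fun k => ((S k)%:~R : R)%:E.
move=> Hx; have Hs := Hx; rewrite einfs_sup_eq in Hs.
have [_ [n0 _ <-] Hn0] : exists2 y, range (einfs u) y & ((x - 2^-1)%:E < y).
  by apply: ereal_sup_gt; rewrite Hs lte_fin; lra.
have Hlow : forall k, (n0 <= k)%N -> (x - 2^-1 < (S k)%:~R)%R.
  move=> k nk; rewrite -lte_fin; apply: (lt_le_trans Hn0).
  by apply: ereal_inf_lbound; exists k.
have Hup : forall n, exists k, (n <= k)%N /\ ((S k)%:~R < x + 2^-1)%R.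
  move=> n; have : einfs u n < (x + 2^-1)%:E.
    apply: (@le_lt_trans _ _ x%:E); last by rewrite lte_fin; lra.
    by rewrite -Hs; apply: ereal_sup_ubound; exists n.
  move=> /ereal_inf_lt [_ [k /= nk <-]]; rewrite lte_fin => H.
  by exists k.
have [k0 [nk0 Hk0]] := Hup n0.
have Hl0 := Hlow k0 nk0.
have key : forall k, (n0 <= k)%N -> (S k0 <= S k)%R.
  move=> k nk; have := Hlow k nk => H.
  have : (((S k0 - 1)%:~R : R) < (S k)%:~R)%R by rewrite rmorphB /=; lra.
  rewrite ltr_int; lia.
have Hio : forall K, exists k, (K <= k)%N /\ S k = S k0.
  move=> K; have [k [nk Hk]] := Hup (maxn K n0).
  exists k; split; first by apply: leq_trans nk; exact: leq_maxl.
  have nk' : (n0 <= k)%N by apply: leq_trans nk; exact: leq_maxr.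
  have := key k nk'; have : (((S k)%:~R : R) < (S k0 + 1)%:~R)%R.
    by rewrite rmorphD /=; lra.
  rewrite ltr_int; lia.
exists (S k0); split; last by split => //; exists n0.
have := @liminf_int_eq R S (S k0) (ex_intro _ n0 key) Hio.
by rewrite -/u Hx => -[].
Qed.

End LimInf.

Lemma io_pigeon (T : finType) (f : nat -> T) (P : nat -> Prop) :
  (forall K, exists k, (K <= k)%N /\ P k) ->
  exists x, forall K, exists k, (K <= k)%N /\ P k /\ f k = x.
Proof.
move=> HP; apply: contrapT => Hn.
have H1 : forall x, exists K, forall k, (K <= k)%N -> P k -> f k <> x.
  move=> x; apply: contrapT => Hx; apply: Hn; exists x => K.
  apply: contrapT => HK; apply: Hx; exists K => k Kk Pk fkx; apply: HK.
  by exists k.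
have [g Hg] := choice H1.
have [k [Kk Pk]] := HP (\max_(x : T) g x).
apply: (Hg (f k) k _ Pk erefl).
by apply: leq_trans Kk; apply: (leq_bigmax (f k)).
Qed.

Lemma fin_liminf (T : finType) (g : nat -> T) (F : T -> int) :
  exists m, (exists K, forall k, (K <= k)%N -> m <= F (g k)) /\
            (forall K, exists k, (K <= k)%N /\ F (g k) = m).
Proof.
pose io x := forall K, exists k, (K <= k)%N /\ g k = x.
pose X := [set x | `[< io x >]].
have [x0 Hx0] : exists x, io x.
  have [x Hx] := @io_pigeon T g (fun _ => True) (fun K => ex_intro _ K (conj (leqnn K) I)).
  by exists x => K; have [k [? [_ ?]]] := Hx K; exists k.
have H1 : forall x, exists K, x \notin X -> forall k, (K <= k)%N -> g k <> x.
  move=> x; have [Hx|Hx] := pselect (io x).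
    by exists 0%N; rewrite inE => /negP; case; apply/asboolP.
  apply: contrapT => Hc; apply: Hx => K; apply: contrapT => HK.
  apply: Hc; exists K => _ k Kk gk; apply: HK; by exists k.
have [h Hh] := choice H1.
have x0X : x0 \in X by rewrite inE; apply/asboolP.
case: (@arg_minP _ _ _ x0 (mem X) F x0X) => xs xsX xsmin.
exists (F xs); split.
  exists (\max_(x : T) h x) => k Kk.
  have gX : g k \in X.
    apply: contraT => gnX; exfalso; apply: (Hh (g k) gnX k) => //.
    by apply: leq_trans Kk; apply: (leq_bigmax (g k)).
  exact: xsmin.
have : xs \in X by exact: xsX.
rewrite inE => /asboolP Hxs K.
have [k [Kk gk]] := Hxs K; exists k; by rewrite gk.
Qed.
Set Implicit Arguments. Unset Strict Implicit. Unset Printing Implicit Defensive.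

Section Game.
Variables (R : realType) (V : finType) (E : rel V) (VE : {set V})
  (w : V -> V -> int) (q0 : V) (I : interval R) (sigma : strategy V).

Definition Wt (s : seq V) : int :=
  \sum_(i < (size s).-1) w (nth q0 s i) (nth q0 s i.+1).

Lemma Wt_rcons s v : s != [::] -> Wt (rcons s v) = Wt s + w (last q0 s) v.
Proof.
case: s => // a s _; rewrite /Wt size_rcons /= big_ord_recr /=; congr (_ + _).
  apply: eq_bigr => i _ /=; rewrite -rcons_cons !nth_rcons /= ltn_ord.
  by rewrite ltnS ltnW ?ltn_ord.
rewrite -rcons_cons !nth_rcons /= ltnS leqnn ltnn eqxx; congr (w _ _).
by rewrite (_ : size s = (size (a :: s)).-1) // nth_last.
Qed.

Lemma Wt1 v : Wt [:: v] = 0.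
Proof. by rewrite /Wt /= big_ord0. Qed.

Lemma prefixS (p : nat -> V) k :
  Defs.prefix p k.+1 = rcons (Defs.prefix p k) (p k).
Proof. by rewrite /Defs.prefix -addn1 iotaD map_cat /= cats1. Qed.

Lemma size_prefix (p : nat -> V) k : size (Defs.prefix p k) = k.
Proof. by rewrite /Defs.prefix size_map size_iota. Qed.

Lemma nth_prefix (p : nat -> V) k i : (i < k)%N -> nth q0 (Defs.prefix p k) i = p i.
Proof. by move=> ik; rewrite /Defs.prefix (nth_map 0%N) ?size_iota // nth_iota. Qed.

Lemma Wt_prefix (p : nat -> V) k : Wt (Defs.prefix p k.+1) = partial_weight w p k.
Proof.
rewrite /Wt size_prefix /partial_weight; apply: eq_bigr => i _.
have hi := ltn_ord i; rewrite !nth_prefix //; lia.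
Qed.

Lemma take_rcons_le (s : seq V) v n : (n <= size s)%N -> take n (rcons s v) = take n s.
Proof. by move=> ns; rewrite -cats1 takel_cat. Qed.

Definition cpath (s : seq V) : Prop :=
  nth q0 s 0 = q0 /\ forall t, (t.+1 < size s)%N ->
    E (nth q0 s t) (nth q0 s t.+1) /\
    (nth q0 s t \in VE -> nth q0 s t.+1 = sigma (take t s) (nth q0 s t)).

Lemma cpath_take s n : cpath s -> cpath (take n s).
Proof.
move=> [h0 hs]; split.
  by case: n => [|n]; [case: s {hs} h0 | rewrite nth_take].
move=> t; rewrite size_take_min leq_min => /andP [tn ts].
rewrite !nth_take // ?(ltnW tn) // take_takel //; last by apply: ltnW; apply: ltnW.
exact: hs.
Qed.

Definition leafc (l : seq V) (i : nat) : Prop :=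
  [/\ (i.+1 < size l)%N, nth q0 l i = last q0 l, Wt (take i.+1 l) = Wt l,
      ((Wt (take i.+1 l))%:~R : R) \in I &
      forall n, (i.+1 <= n <= size l)%N -> Wt (take i.+1 l) <= Wt (take n l)].

Definition LF (s : seq V) : Prop := forall n i, (n <= size s)%N -> ~ leafc (take n s) i.

Definition Good (s : seq V) : Prop := [/\ s != [::], cpath s & LF s].

Lemma LF_take s n : LF s -> LF (take n s).
Proof.
move=> H m i; rewrite size_take_min leq_min => /andP [mn ms].
by rewrite take_takel //; apply: H.
Qed.

Lemma Good_take s n : (0 < n)%N -> Good s -> Good (take n s).
Proof.
move=> n0 [s0 cs ls]; split; [|exact: cpath_take|exact: LF_take].
by case: s s0 {cs ls} => // a s _; case: n n0.
Qed.

Definition norm (l : seq V) : seq V :=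
  match pselect (exists i, leafc l i) with
  | left H => take (proj1_sig (cid H)).+1 l
  | right _ => l
  end.

Lemma normP l : (~ (exists i, leafc l i) /\ norm l = l) \/
                (exists i, leafc l i /\ norm l = take i.+1 l).
Proof.
rewrite /norm; case: pselect => [H|H]; last by left.
by right; case: (cid H) => i Hi /=; exists i.
Qed.

Definition updS (m : seq V) (v : V) := norm (rcons m v).
Definition outS (m : seq V) (v : V) :=
  let n := updS m v in sigma (take (size n).-1 n) v.

Lemma updS_cases m v :
  updS m v = rcons m v \/
  exists i, leafc (rcons m v) i /\ updS m v = take i.+1 (rcons m v).
Proof. by rewrite /updS; case: (normP (rcons m v)) => [[_ ->]|]; [left|right]. Qed.

Lemma updS_good m v : LF m -> cpath (rcons m v) ->
  [/\ Good (updS m v), last q0 (updS m v) = v,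
      Wt (updS m v) = Wt (rcons m v) &
      take (size (updS m v)) (rcons m v) = updS m v].
Proof.
move=> lm cl; rewrite /updS; case: (normP (rcons m v)) => [[nl ->]|[i [li ->]]].
  split; last by rewrite take_size.
  - split; [by rewrite -size_eq0 size_rcons | exact: cl |].
    move=> n j; rewrite size_rcons leq_eqVlt ltnS => /orP [/eqP ->|nm].
      by rewrite -(size_rcons m v) take_size => lj; apply: nl; exists j.
    by rewrite take_rcons_le //; apply: lm.
  - by rewrite last_rcons.
  - by [].
case: li => si ni wi ii mi.
have sim : (i.+1 <= size m)%N by rewrite -ltnS -(size_rcons m v).
split.
- split; first by rewrite -size_eq0 size_takel ?(ltnW si).
  + exact: cpath_take.
  + move=> n j; rewrite size_take_min leq_min => /andP [nm _].
    rewrite take_takel // take_rcons_le; first by apply: lm; apply: leq_trans sim.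
    exact: leq_trans sim.
- by rewrite (take_nth q0) ?(ltnW si) // last_rcons ni last_rcons.
- exact: wi.
- by rewrite size_takel ?take_take // (ltnW si) // take_takel.
Qed.

Lemma good_bounded (Hw : winning_strategy E VE w q0 I sigma) :
  exists D, forall s, Good s -> (size s <= D)%N.
Proof.
apply: contrapT => HnD.
have HD : forall D, exists s, Good s /\ (D < size s)%N.
  move=> D; apply: contrapT => H; apply: HnD; exists D => s gs.
  rewrite leqNgt; apply/negP => Hlt; apply: H; by exists s.
pose inf s := forall D, exists s', [/\ Good s', (D < size s')%N & take (size s) s' = s].
have inf0 : inf [:: q0].
  move=> D; have [s' [gs' Ds']] := HD D; exists s'; split => //.
  case: gs' => s0 [h0 _] _; case: s' s0 h0 {Ds'} => // a s' _ /= ->.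
  by rewrite take0.
have infstep : forall s, inf s -> exists v, inf (rcons s v).
  move=> s Hs; apply: contrapT => Hn.
  have H1 : forall v, exists Dv, forall s', Good s' -> (Dv < size s')%N ->
      take (size s).+1 s' <> rcons s v.
    move=> v; apply: contrapT => Hv; apply: Hn; exists v => D.
    apply: contrapT => HD'; apply: Hv; exists D => s' gs' Ds' ts'.
    by apply: HD'; exists s'; split => //; rewrite size_rcons.
  have [g Hg] := choice H1.
  have [s' [gs' Ds' ts']] := Hs (maxn (size s) (\max_v g v)).
  have ss' : (size s < size s')%N by apply: leq_ltn_trans Ds'; exact: leq_maxl.
  apply: (Hg (nth q0 s' (size s)) s' gs').
    apply: leq_ltn_trans Ds'; apply: leq_trans (leq_maxr _ _).
    exact: (leq_bigmax (nth q0 s' (size s))).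
  by rewrite (take_nth q0) // ts'.
have inf_good : forall s, s != [::] -> inf s -> Good s.
  move=> s s0 Hs; have [s' [gs' _ ts']] := Hs 0%N; rewrite -ts'.
  by apply: Good_take => //; rewrite lt0n size_eq0.
have H2 : forall s, exists v, inf s -> inf (rcons s v).
  move=> s; case: (pselect (inf s)) => [Hs|Hs]; last by exists q0.
  by have [v Hv] := infstep s Hs; exists v.
have [f Hf] := choice H2.
pose br := fix br k := if k is k'.+1 then rcons (br k') (f (br k')) else [:: q0].
have binf : forall k, inf (br k) by elim => //= k IH; exact: Hf.
have bsize : forall k, size (br k) = k.+1 by elim => //= k IH; rewrite size_rcons IH.
have bne : forall k, br k != [::] by move=> k; rewrite -size_eq0 bsize.
have bgood : forall k, Good (br k) by move=> k; exact: inf_good.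
have btake : forall k m, (k <= m)%N -> take k.+1 (br m) = br k.
  move=> k m; elim: m => [|m IH]; first by rewrite leqn0 => /eqP ->.
  rewrite leq_eqVlt => /orP [/eqP ->|km]; first by rewrite -(bsize m.+1) take_size.
  by rewrite /= take_rcons_le ?bsize // IH.
pose p k := last q0 (br k).
have bnth : forall k m, (k <= m)%N -> nth q0 (br m) k = p k.
  move=> k m km; rewrite /p -nth_last bsize /= -(btake k m km) nth_take //.
have bpref : forall k, Defs.prefix p k.+1 = br k.
  move=> k; apply: (@eq_from_nth _ q0); first by rewrite size_prefix bsize.
  move=> i; rewrite size_prefix => ik; rewrite nth_prefix // bnth //.
have btake' : forall k m, (k <= m)%N -> take k (br m) = Defs.prefix p k.
  move=> [|k] m km; first by rewrite take0.
  by rewrite btake ?bpref //; apply: ltnW.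
have play : is_play E q0 p.
  split => // k; have [_ [_ cp] _] := bgood k.+1.
  have [Ek _] : _ := cp k (eq_ind_r (fun n => (k.+1 < n)%N) (ltnSn k.+1) (bsize k.+1)).
  by rewrite !bnth // in Ek.
have cons : consistent VE sigma p.
  move=> k pk; have [_ [_ cp] _] := bgood k.+1.
  have [_ Ck] : _ := cp k (eq_ind_r (fun n => (k.+1 < n)%N) (ltnSn k.+1) (bsize k.+1)).
  by rewrite !bnth // in Ck; rewrite Ck // btake' //.
have [x [tx xI]] := Hw.2 p play cons.
have [N [xN [[K HK] Hio]]] := @liminf_int_fin R (partial_weight w p) x tx.
have [vx Hvx] := @io_pigeon V p (fun k => (K <= k)%N /\ partial_weight w p k = N)
   (fun K' => let: ex_intro k (conj k1 k2) := Hio (maxn K K') in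
      ex_intro _ k (conj (leq_trans (leq_maxr _ _) k1)
                         (conj (leq_trans (leq_maxl _ _) k1) k2))).
have [k1 [_ [[Kk1 S1] pk1]]] := Hvx K.
have [k2 [k12 [[_ S2] pk2]]] := Hvx k1.+1.
have [_ _ lf] := bgood k2.
apply: (lf (size (br k2)) k1 (leqnn _)); rewrite take_size.
split.
- by rewrite bsize ltnS.
- by rewrite -nth_last bsize /= !bnth // ?pk1 ?pk2 //; apply: ltnW.
- by rewrite btake ?(ltnW k12) // -bpref Wt_prefix S1 -(bpref k2) Wt_prefix S2.
- by rewrite btake ?(ltnW k12) // -bpref Wt_prefix S1 -xN.
- move=> [|n]; first by rewrite ltn0.
  rewrite ltnS bsize ltnS => /andP [k1n nk2].
  rewrite btake ?(ltnW k12) // btake // -bpref Wt_prefix S1 -bpref Wt_prefix.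
  by apply: HK; apply: leq_trans k1n.
Qed.

Lemma cpath_rcons n v : cpath n -> n != [::] -> E (last q0 n) v ->
  (last q0 n \in VE -> v = sigma (take (size n).-1 n) (last q0 n)) ->
  cpath (rcons n v).
Proof.
move=> [h0 hn] n0 Ev Hv; split.
  by case: n n0 h0 {hn Ev Hv} => // a n _.
move=> t; rewrite size_rcons ltnS leq_eqVlt => /orP [/eqP tn|tn].
  have tn' : t = (size n).-1 by rewrite -tn.
  have tl : (t < size n)%N by rewrite -tn.
  rewrite !nth_rcons tl -tn ltnn eqxx take_rcons_le; last by apply: ltnW.
  by rewrite tn' nth_last; split => // /Hv.
rewrite !nth_rcons tn ltnW // take_rcons_le; last by apply: ltnW; apply: ltnW.
exact: hn.
Qed.

Lemma fm_exists (Hw : winning_strategy E VE w q0 I sigma) (D : nat)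
  (HD : forall s, Good s -> (size s <= D)%N) :
  exists sigma', winning_strategy E VE w q0 I sigma' /\ finite_memory sigma'.
Proof.
pose M := {bseq D of V}.
pose upd (m : M) v : M := insub_bseq D (updS (val m) v).
pose out (m : M) v := outS (val m) v.
pose m0 : M := insub_bseq D [::].
pose sig' : strategy V := fun h v => out (foldl upd m0 h) v.
exists sig'; split; last by exists M, m0, upd, out.
split; first by move=> h v vVE; apply: Hw.1.
move=> p play cons.
have insK : forall s : seq V, (size s <= D)%N -> val (insub_bseq D s) = s.
  by move=> s sD; rewrite /insub_bseq insubdK.
pose mem k := foldl upd m0 (Defs.prefix p k).
have memS : forall k, mem k.+1 = upd (mem k) (p k).
  by move=> k; rewrite /mem prefixS foldl_rcons.
pose S := partial_weight w p.
pose Q k := [/\ val (mem k.+1) = updS (val (mem k)) (p k), Good (val (mem k.+1)),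
  last q0 (val (mem k.+1)) = p k, Wt (val (mem k.+1)) = S k &
  take (size (val (mem k.+1))) (rcons (val (mem k)) (p k)) = val (mem k.+1)].
have stepQ : forall k, LF (val (mem k)) -> cpath (rcons (val (mem k)) (p k)) ->
    Wt (rcons (val (mem k)) (p k)) = S k -> Q k.
  move=> k lm cl wl; have [G L W T] := updS_good lm cl.
  have sz := HD _ G.
  by rewrite /Q memS /upd insK //; split => //; rewrite W.
have HQ : forall k, Q k.
  elim => [|k [e1 G L W T]].
    have m0v : val (mem 0) = [::] by rewrite /mem /= insK.
    apply: stepQ; rewrite m0v.
    - by move=> n i; rewrite leqn0 => /eqP ->; case.
    - split; first by case: play => ->.
      by move=> t; rewrite ltnS ltn0.
    - by rewrite Wt1 /S /partial_weight big_ord0.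
  have [n0 cn lfn] := G.
  apply: stepQ => //.
  - apply: cpath_rcons => //; rewrite L; first by apply: play.2.
    move=> pk; rewrite (cons k pk) /sig' /out /outS -/(mem k) -e1.
    by [].
  - by rewrite Wt_rcons // W L /S /partial_weight big_ord_recr.
pose nn k := val (mem k.+1).
have nnG : forall k, Good (nn k) by move=> k; case: (HQ k).
have nnW : forall k, Wt (nn k) = S k by move=> k; case: (HQ k).
have nnS : forall k, nn k.+1 = updS (nn k) (p k.+1) by move=> k; case: (HQ k.+1).
have nnT : forall k, take (size (nn k.+1)) (rcons (nn k) (p k.+1)) = nn k.+1.
  by move=> k; case: (HQ k.+1).
have [mm [[K2 HK2] io2]] := @fin_liminf M (fun k => mem k.+1) (fun m => Wt (val m)).
have [dd [[K0 HK0] io0]] := @fin_liminf M (fun k => mem k.+1) (fun m => Posz (size (val m))).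
have [k_ [_ hk_]] := io0 0%N.
move: HK0 io0; rewrite -hk_ /= => HK0 io0.
set d := size (val (mem k_.+1)) in HK0 io0.
have HK0' : forall k, (K0 <= k)%N -> (d <= size (nn k))%N.
  by move=> k Kk; have := HK0 k Kk; rewrite lez_nat.
have io0' : forall K, exists k, (K <= k)%N /\ size (nn k) = d.
  by move=> K; have [k [Kk e]] := io0 K; exists k; split => //; case: e.
have pconst : forall k j, (K0 <= k)%N -> take d (nn (k + j)%N) = take d (nn k).
  move=> k j Kk; elim: j => [|j IH]; first by rewrite addn0.
  rewrite addnS -nnT take_takel; last by apply: HK0'; lia.
  by rewrite take_rcons_le ?IH //; apply: HK0'; lia.
have [kk [Kkk Wkk]] := io2 (maxn K0 K2).
have K0kk : (K0 <= kk)%N by apply: leq_trans Kkk; exact: leq_maxl.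
have K2kk : (K2 <= kk)%N by apply: leq_trans Kkk; exact: leq_maxr.
pose pre (a b : seq V) := take (size a) b == a.
have exP : exists t, (kk < t)%N && pre (nn t) (nn kk).
  have [t [kt st]] := io0' kk.+1; exists t; rewrite kt /pre st /=.
  have := pconst kk (t - kk)%N K0kk; rewrite subnKC; last exact: ltnW.
  by move=> <-; rewrite -st take_size.
case: (ex_minnP exP) => k' /andP [kk' pk'] Hmin.
have Hind : forall j, (kk + j < k')%N -> pre (nn kk) (nn (kk + j)%N).
  elim => [|j IH] hj; first by rewrite addn0 /pre take_size.
  have hj' : (kk + j < k')%N by lia.
  have {}IH := IH hj'; move: IH; rewrite /pre => /eqP IH.
  set t := (kk + j)%N in IH hj *.
  have -> : (kk + j.+1)%N = t.+1 by rewrite /t addnS.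
  have hj2 : (t.+1 < k')%N by rewrite /t -addnS.
  have st : (size (nn kk) <= size (nn t))%N by rewrite -IH size_take_min geq_minr.
  have Tl := nnT t.
  have Ek : take (size (nn kk)) (rcons (nn t) (p t.+1)) = nn kk by rewrite take_rcons_le.
  case: (leqP (size (nn t.+1)) (size (nn kk))) => hs.
    exfalso; have : (k' <= t.+1)%N.
      apply: Hmin; apply/andP; split; first by rewrite /t; lia.
      by apply/eqP; rewrite -{1}Ek take_takel // Tl.
    by rewrite leqNgt hj2.
  by apply/eqP; rewrite -Tl take_takel ?(ltnW hs) // Ek.
have [t et] : exists t, k' = t.+1 by exists k'.-1; rewrite prednK // (leq_ltn_trans (leq0n kk) kk').
subst k'.
have kkt : (kk <= t)%N by rewrite -ltnS.
have Ht := Hind (t - kk)%N (eq_ind_r (fun x => (x < t.+1)%N) (ltnSn t) (subnKC kkt)).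
rewrite subnKC // /pre in Ht; move/eqP: Ht => Ht.
move/eqP: pk' => pk'.
have skt : (size (nn kk) <= size (nn t))%N by rewrite -Ht size_take_min geq_minr.
have sk'k : (size (nn t.+1) <= size (nn kk))%N by rewrite -pk' size_take_min geq_minr.
have fin : Wt (nn t.+1) = mm /\ ((mm%:~R : R) \in I).
  case: (updS_cases (nn t) (p t.+1)) => [e|[i [li e]]]; rewrite -nnS in e.
    exfalso; move: sk'k; rewrite e size_rcons => h.
    by have := leq_trans h skt; rewrite ltnn.
  case: li => si ni wi ii mi.
  have Hsz : size (nn t.+1) = i.+1 by rewrite e size_takel // ltnW.
  have hlo : (Wt (take i.+1 (rcons (nn t) (p t.+1))) <= mm)%R.
    rewrite -Wkk; have := mi (size (nn kk)).
    have h1 : (i < size (nn kk))%N by rewrite -Hsz.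
    rewrite h1 /= size_rcons (leqW skt) => /(_ isT).
    by rewrite [take (size (nn kk)) _]take_rcons_le // Ht.
  have hhi : (mm <= Wt (nn t.+1))%R.
    by apply: HK2; apply: leq_trans K2kk _; apply: leq_trans kkt _.
  have eq : Wt (nn t.+1) = mm by apply/eqP; rewrite eq_le hhi e hlo.
  by split => //; rewrite -eq e.
have tot : Defs.total w p = (mm%:~R : R)%:E.
  rewrite /Defs.total; apply: liminf_int_eq.
    by exists K2 => k Kk; rewrite -/S -nnW; apply: HK2.
  by move=> K; have [k [Kk e]] := io2 K; exists k; split => //; rewrite -/S -nnW.
by exists (mm%:~R); split => //; case: fin.
Qed.

End Game.

Unset Implicit Arguments.
Set Strict Implicit.
Close Scope ring_scope.

Theorem mainTheorem18 (R : realType) (V : finType) (E : rel V) (VE : {set V})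
  (w : V -> V -> int) (q0 : V) (I : interval R)
  (Hout : forall v : V, exists u : V, E v u) :
  (exists sigma : strategy V, winning_strategy E VE w q0 I sigma) ->
  exists sigma : strategy V, winning_strategy E VE w q0 I sigma /\ finite_memory sigma.
Proof.
move=> [sigma Hw].
have [D HD] := @good_bounded R V E VE w q0 I sigma Hw.
exact: (@fm_exists R V E VE w q0 I sigma Hw D HD).
Qed.
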